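(* Let $G$ be a countable discrete group and let $\theta=(\{X_t\}_{t\in G},\{h_t\}_{t\in G})$ be a free topological partial action of $G$ on a $\sigma$-compact Hausdorff space $X$ such that every $X_t$ is $\sigma$-compact. Let $$R=\{(x,h_t(x)) : t\in G,\ x\in X_{t^{-1}}\}\subseteq X\times X,$$ equipped with the topology transported from the product topology of $X\times G$ ($G$ discrete) via the injective map $(x,h_t(x))\mapsto (x,t)$. Then $R$ is an equivalence relation on $X$, and with this topology it is an étale equivalence relation.
   Context: A topological partial action of $G$ on $X$ is a pair $(\{X_t\}_{t\in G},\{h_t\}_{t\in G})$ where each $X_t\subseteq X$ is open, each $h_t:X_{t^{-1}}\to X_t$ is a homeomorphism, and: (1) $X_e=X$ and $h_e=\mathrm{id}_X$; (2) $h_t(X_{t^{-1}}\cap X_s)=X_t\cap X_{ts}$ for all $s,t$; (3) $h_t(h_s(x))=h_{ts}(x)$ for $x\in X_{s^{-1}}\cap X_{s^{-1}t^{-1}}$. It is free if $h_t(x)=x$ for some $x\in X_{t^{-1}}$ implies $t=e$; freeness guarantees that for each $(x,y)\in R$ there is a unique $t$ with $y=h_t(x)$, so the map $(x,h_t(x))\mapsto(x,t)$ is injective. Thus a sequence $(x_n,h_{t_n}(x_n))$ converges to $(x,h_t(x))$ iff $x_n\to x$ in $X$ and $t_n=t$ eventually. An étale equivalence relation is an equivalence relation $R\subseteq X\times X$ with a topology such that $R$ is $\sigma$-compact, the diagonal $\{(x,x):x\in X\}$ is open in $R$, and every $(x,y)\in R$ has a neighbourhood $U$ in $R$ on which the range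 map $r(x,y)=x$ and the source map $s(x,y)=y$ restrict to homeomorphisms onto open subsets of $X$. *)

(* Defs.v *)
From HB Require Import structures.
From mathcomp Require Import all_boot all_order all_algebra.
From mathcomp Require Import all_classical all_reals.
From mathcomp Require Import topology.
Set Implicit Arguments. Unset Strict Implicit. Unset Printing Implicit Defensive.
Local Open Scope classical_set_scope.

Definition is_group (G : Type) (mul : G -> G -> G) (inv : G -> G) (e : G) : Prop :=
  [/\ associative mul, left_id e mul, right_id e mul,
      left_inverse e inv mul & right_inverse e inv mul].

Definition homeo_between (S T : topologicalType) (A : set S) (B : set T)
  (f : S -> T) : Prop :=
  [/\ f @` A = B,
      (forall x y, A x -> A y -> f x = f y -> x = y),
      {within A, continuous f} &
      exists g : T -> S,
        [/\ g @` B `<=` A, (forall y, B y -> f (g y) = y) &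
            {within B, continuous g}]].

Definition sigma_compact (T : topologicalType) (A : set T) : Prop :=
  exists K : nat -> set T, (forall n, compact (K n)) /\ \bigcup_n K n = A.

(** Topological partial action ({Xs t}, {h t}) of (G,mul,inv,e) on X.
    h t is a total function, only relevant on Xs (inv t). *)
Definition topological_partial_action (G : Type) (mul : G -> G -> G)
  (inv : G -> G) (e : G) (X : topologicalType) (Xs : G -> set X)
  (h : G -> X -> X) : Prop :=
  [/\ (forall t, open (Xs t)),
      (forall t, homeo_between (Xs (inv t)) (Xs t) (h t)),
      Xs e = setT /\ (forall x, h e x = x),
      (forall s t, h t @` (Xs (inv t) `&` Xs s) = Xs t `&` Xs (mul t s)) &
      (forall s t x, Xs (inv s) x -> Xs (mul (inv s) (inv t)) x ->
         h t (h s x) = h (mul t s) x)].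

Definition free_partial_action (G : Type) (inv : G -> G) (e : G)
  (X : Type) (Xs : G -> set X) (h : G -> X -> X) : Prop :=
  forall t x, Xs (inv t) x -> h t x = x -> t = e.

Definition orbit_rel (G : Type) (inv : G -> G) (X : Type) (Xs : G -> set X)
  (h : G -> X -> X) : set (X * X) :=
  [set p | exists t, Xs (inv t) p.1 /\ p.2 = h t p.1].

(** The map (x, h_t x) |-> (x, t) from R to X * G (G discrete);
    t is chosen (it is unique when the action is free). *)
Definition orbit_coord (G : choiceType) (inv : G -> G) (e : G)
  (X : topologicalType) (Xs : G -> set X) (h : G -> X -> X)
  (p : set_type (orbit_rel inv Xs h)) : X * discrete_topology G :=
  ((val p).1,
   xget e [set t | Xs (inv t) (val p).1 /\ (val p).2 = h t (val p).1]).

Definition orbit_space (G : choiceType) (inv : G -> G) (e : G)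
  (X : topologicalType) (Xs : G -> set X) (h : G -> X -> X) : topologicalType :=
  initial_topology (@orbit_coord G inv e X Xs h).

(** Etale equivalence relation: Rs is an equivalence relation on X and
    T is Rs equipped with a topology, T being identified with Rs via the
    bijection i : T -> Rs. *)
Definition etale_equivalence_relation (X : topologicalType) (Rs : set (X * X))
  (T : topologicalType) (i : T -> X * X) : Prop :=
  [/\ (forall p q, i p = i q -> p = q) /\ range i = Rs,
      [/\ (forall x, Rs (x, x)), (forall x y, Rs (x, y) -> Rs (y, x)) &
          (forall x y z, Rs (x, y) -> Rs (y, z) -> Rs (x, z))],
      sigma_compact [set: T],
      open [set p : T | (i p).1 = (i p).2] &
      forall p : T, exists U : set T, nbhs p U /\
        (open ((fst \o i) @` U) /\ homeo_between U ((fst \o i) @` U) (fst \o i)) /\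
        (open ((snd \o i) @` U) /\ homeo_between U ((snd \o i) @` U) (snd \o i))].

(* Main.v *)
Require Import Defs.
From HB Require Import structures.
From mathcomp Require Import all_boot all_order all_algebra.
From mathcomp Require Import all_classical all_reals.
From mathcomp Require Import topology.
Local Open Scope classical_set_scope.

Lemma cont_initial_at {Y : choiceType} {X Z : topologicalType}
  (w : Y -> Z) (f : X -> initial_topology w) z :
  {for z, continuous (w \o f)} -> {for z, continuous f}.
Proof.
move=> cf U [?/= [[W oW <-]]] /= Wsfz /filterS; apply; apply: cf.
exact: open_nbhs_nbhs.
Qed.

Lemma cont_fst {U V : topologicalType} (p : U * V) : {for p, continuous (@fst U V)}.
Proof. case: p => a b; exact: cvg_fst. Qed.
Lemma cont_snd {U V : topologicalType} (p : U * V) : {for p, continuous (@snd U V)}.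
Proof. case: p => a b; exact: cvg_snd. Qed.

Lemma cont_pair_cst {U V : topologicalType} (v : V) (x : U) :
  {for x, continuous (fun y => (y, v))}.
Proof. apply: cvg_pair; [exact: cvg_id | exact: cvg_cst]. Qed.


Lemma grp_facts (G : Type) (mul : G -> G -> G) (inv : G -> G) (e : G) :
  is_group mul inv e ->
  [/\ forall t, inv (inv t) = t, inv e = e,
      (forall t s, inv (mul t s) = mul (inv s) (inv t)),
      (forall s t, mul (inv s) t = e -> t = s) &
      (forall t, mul (inv t) t = e /\ mul t (inv t) = e)].
Proof.
case=> mA m1 m1' mV mV'.
have uq a b : mul a b = e -> b = inv a.
  by move=> ab; rewrite -[b]m1 -(mV a) -mA ab m1'.
have invK t : inv (inv t) = t by apply/esym/uq/mV.
split => //.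
- by apply/esym/uq; rewrite m1.
- move=> t s; apply/esym/uq.
  by rewrite -mA [mul s (mul _ _)]mA mV' m1 mV'.
- by move=> s t /uq ->; rewrite invK.
Qed.

Theorem mainTheorem1 (G : countType) (mul : G -> G -> G) (inv : G -> G) (e : G)
  (X : topologicalType) (Xs : G -> set X) (h : G -> X -> X) :
  is_group mul inv e ->
  topological_partial_action mul inv e Xs h ->
  free_partial_action inv e Xs h ->
  hausdorff_space X ->
  sigma_compact [set: X] ->
  (forall t, sigma_compact (Xs t)) ->
  etale_equivalence_relation (orbit_rel inv Xs h)
    (fun p : @orbit_space G inv e X Xs h => val (p : set_type (orbit_rel inv Xs h))).
Proof.
move=> grp [Xop hhom [Xe he] ax4 ax5] fr _ _ sig.
have [invK inve invM cancel mV] := @grp_facts _ _ _ _ grp.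
have hin t x : Xs (inv t) x -> Xs t (h t x).
  by move=> xi; have [<- _ _ _] := hhom t; exists x.
have hK t x : Xs (inv t) x -> h (inv t) (h t x) = x.
  move=> xi; rewrite ax5 // ?invK (mV t).1 ?Xe //.
have huq t s x : Xs (inv t) x -> Xs (inv s) x -> h t x = h s x -> t = s.
  move=> xt xs E.
  have yt : Xs (inv (inv t)) (h t x) by rewrite invK; exact: hin.
  have : (Xs (inv t) `&` Xs (mul (inv t) s)) (h (inv t) (h s x)).
    rewrite -ax4; exists (h s x) => //.
    by split; [rewrite -E invK; exact: hin|exact: hin].
  rewrite -E hK // => -[_ xts].
  apply: (cancel s t); apply: (fr _ x); first by rewrite invM invK.
  by rewrite -ax5 ?invK // E hK.
set R := orbit_rel inv Xs h.
set c := @orbit_coord G inv e X Xs h.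
have coordE (p : set_type R) t : Xs (inv t) (val p).1 -> (val p).2 = h t (val p).1 ->
    c p = ((val p).1, t).
  move=> xt E; rewrite /c /orbit_coord; congr pair.
  apply: xget_unique => // s [xs Es]; apply: (huq s t (val p).1) => //.
  by rewrite -Es.
have Rrefl x : R (x, x) by exists e; rewrite inve Xe he.
pose phi t y := if pselect (Xs (inv t) y) is left _ then (y, h t y) else (y, y).
have phiR t y : R (phi t y).
  rewrite /phi; case: pselect => // yt; by exists t.
pose F t y : orbit_space inv e Xs h := SigSub (mem_set (phiR t y)).
have FE t y : Xs (inv t) y -> val (F t y) = (y, h t y).
  by move=> yt; rewrite /= /phi; case: pselect.
have Fc t y : Xs (inv t) y -> c (F t y) = (y, t).
  by move=> yt; have := coordE (F t y) t; rewrite FE //=; apply.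
have Fcont t y : Xs (inv t) y -> {for y, continuous (F t)}.
  move=> yt; apply: cont_initial_at.
  rewrite -/c /prop_for /continuous_at /= Fc //.
  have := @cont_pair_cst X (discrete_topology G) t y; rewrite /prop_for /continuous_at => H; apply: cvg_trans H.
  apply: near_eq_cvg; near=> z.
  by rewrite /= Fc //; near: z; apply: open_nbhs_nbhs; split; [exact: Xop|].
have pt (p : set_type R) : exists t, Xs (inv t) (val p).1 /\ (val p).2 = h t (val p).1.
  exact: (set_valP p).
have Rsym x y : R (x, y) -> R (y, x).
  case=> t /= [xt ->]; exists (inv t) => /=; split; first by rewrite invK; exact: hin.
  by rewrite hK.
have Rtrans x y z : R (x, y) -> R (y, z) -> R (x, z).
  case=> s /= [xs ->] [t /= [yt ->]].
  have : (Xs (inv s) `&` Xs (mul (inv s) (inv t))) (h (inv s) (h s x)).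
    rewrite -ax4; exists (h s x) => //; split => //; rewrite invK; exact: hin.
  rewrite hK // => -[_ xst].
  by exists (mul t s); rewrite invM ax5.
have sndc : continuous (fun q : orbit_space inv e Xs h => (c q).2).
  move=> q; apply: (@continuous_comp (orbit_space inv e Xs h) (X * discrete_topology G)%type _ c snd q).
    exact: initial_continuous.
  exact: cont_snd.
have fstc : continuous (fun q : orbit_space inv e Xs h => (c q).1).
  move=> q; apply: (@continuous_comp (orbit_space inv e Xs h) (X * discrete_topology G)%type _ c fst q).
    exact: initial_continuous.
  exact: cont_fst.
split.
- split; first by move=> p q; exact: val_inj.
  rewrite eqEsubset; split; first by move=> _ [p _ <-]; exact: set_valP.
  by move=> q Rq; exists (SigSub (mem_set Rq)).
- by split.
- have [K HK] : {K : G -> nat -> set X & forall t,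
      (forall n, compact (K t n)) /\ \bigcup_n K t n = Xs (inv t)}.
    by apply: (@choice G (nat -> set X) (fun t K => (forall n, compact (K n)) /\ \bigcup_n K n = Xs (inv t))) => t; exact: sig.
  exists (fun n => match unpickle n : option (G * nat) with
                   | Some (t, m) => F t @` K t m | None => set0 end).
  split.
    move=> n; case: (unpickle n) => [[t m]|]; last exact: compact0.
    apply: (@continuous_compact X (orbit_space inv e Xs h) (F t)); last exact: (HK t).1.
    apply: continuous_in_subspaceT => x /set_mem xK; apply: Fcont.
    by rewrite -(HK t).2; exists m.
  apply/seteqP; split => // q _; have [t [xt E]] := pt q.
  have := xt; rewrite -(HK t).2 => -[m _ xm].
  exists (pickle (t, m)) => //; rewrite pickleK; exists (val q).1 => //.
  by apply: val_inj; rewrite FE // [RHS]surjective_pairing E.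
- have -> : [set p : orbit_space inv e Xs h | (val p).1 = (val p).2] =
      (fun q : orbit_space inv e Xs h => (c q).2) @^-1` [set e].
    apply/seteqP; split => p; have [t [xt E]] := pt p;
      rewrite /preimage /set1 /mkset; cbv beta; rewrite (coordE p t) // E.
      by move=> /esym; exact: fr.
    by move=> /= ->; rewrite he.
  apply: open_comp; first by move=> q _; exact: sndc.
  exact: discrete_open.
move=> p; have [t [xt E]] := pt p.
pose U := [set q : orbit_space inv e Xs h | Xs (inv t) (val q).1 /\ (c q).2 = t].
have memU q : U q <-> Xs (inv t) (val q).1 /\ (val q).2 = h t (val q).1.
  split => [[qx cq]|[qx Eq]]; split => //.
    have [s [xs Es]] := pt q.
    by move: cq; rewrite (coordE q s) //= => <-.
  by rewrite (coordE q t).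
have Uo : open U.
  change (open ((fun q : orbit_space inv e Xs h => (c q).1) @^-1` Xs (inv t) `&`
     (fun q : orbit_space inv e Xs h => (c q).2) @^-1` [set t])).
  apply: openI; apply: open_comp.
  - by move=> q _; exact: fstc.
  - exact: Xop.
  - by move=> q _; exact: sndc.
  - exact: discrete_open.
have hcont s y : Xs (inv s) y -> {for y, continuous (h s)}.
  move=> ys; have [_ _ + _] := hhom s.
  rewrite continuous_open_subspace; last exact: Xop.
  by move=> /(_ y (mem_set ys)).
have hinvin y : Xs t y -> Xs (inv t) (h (inv t) y).
  by move=> yt; apply: hin; rewrite invK.
have hinvK y : Xs t y -> h t (h (inv t) y) = y.
  by move=> yt; have := hK (inv t) y; rewrite invK; apply.
exists U; split.
  by apply: open_nbhs_nbhs; split => //; apply/memU.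
split.
  have imf : (fst \o val) @` U = Xs (inv t).
    apply/seteqP; split => [_ [q /memU [qx _] <-] //|y yt].
    by exists (F t y); [apply/memU; rewrite FE|exact: (congr1 fst (FE t y yt))].
  rewrite imf; split; first exact: Xop.
  split => //.
  - move=> q1 q2 /memU [_ E1] /memU [_ E2] /= Eq; apply: val_inj.
    by rewrite [val q1]surjective_pairing [val q2]surjective_pairing E1 E2 Eq.
  - by apply: continuous_subspaceT => q; exact: (fstc q).
  exists (F t); split.
  - by move=> _ [y yt <-]; apply/memU; rewrite FE.
  - by move=> y yt; exact: (congr1 fst (FE t y yt)).
  rewrite continuous_open_subspace; last exact: Xop.
  by move=> y /set_mem yt; exact: Fcont.
have imf : (snd \o val) @` U = Xs t.
  apply/seteqP; split => [_ [q /memU [qx Eq] <-]|y yt]; first by change (Xs t (val q).2); rewrite Eq; exact: hin.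
  have zt := hinvin y yt.
  exists (F t (h (inv t) y)); first by apply/memU; rewrite FE.
  by rewrite -[RHS](hinvK y yt); exact: (congr1 snd (FE t _ (hinvin y yt))).
rewrite imf; split; first exact: Xop.
split => //.
- move=> q1 q2 /memU [x1 E1] /memU [x2 E2] /= Eq; apply: val_inj.
  have [_ hinj _ _] := hhom t.
  have E12 : (val q1).1 = (val q2).1 by apply: hinj => //; rewrite -E1 -E2.
  by rewrite [val q1]surjective_pairing [val q2]surjective_pairing E1 E2 E12.
- rewrite continuous_open_subspace //; move=> q /set_mem /memU [qx Eq].
  have hc : {for q, continuous (h t \o (fun q : orbit_space inv e Xs h => (c q).1))}.
    by apply: continuous_comp; [exact: fstc|exact: hcont].
  move: hc; rewrite /prop_for /continuous_at => hc.
  have -> : (snd \o val) q = (h t \o (fun q : orbit_space inv e Xs h => (c q).1)) q.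
    exact: Eq.
  apply: cvg_trans hc.
  apply: (@near_eq_cvg _ _ (nbhs q)); near=> r.
  have : U r by near: r; apply: open_nbhs_nbhs; split => //; apply/memU.
  by move=> /memU [_ Er]; exact: (esym Er).
exists (fun y => F t (h (inv t) y)); split.
- by move=> _ [y yt <-]; have zt := hinvin y yt; apply/memU; rewrite FE.
- by move=> y yt; rewrite -[RHS](hinvK y yt); exact: (congr1 snd (FE t _ (hinvin y yt))).
rewrite continuous_open_subspace; last exact: Xop.
move=> y /set_mem yt; apply: continuous_comp; first by apply: hcont; rewrite invK.
exact: Fcont (hinvin _ yt).
Unshelve. all: end_near.
Qed.
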